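(* Let $G:[0,1]\to\mathbb R$ be convex and differentiable on $(0,1)$, and let $0\le a\le b\le1$. Then: (i) $\frac12\big(D_G(a\parallel x)+D_G(b\parallel x)\big)\ge\mathrm{JB}_G(a,b)$ for every $x\in[0,1]$; (ii) (reverse triangle inequality) for every $x\in[a,b]$, $\mathrm{JB}_G(a,x)+\mathrm{JB}_G(x,b)\le\mathrm{JB}_G(a,b)$; (iii) for all $a\le a'\le b'\le b$, $\mathrm{JB}_G(a',b')\le\mathrm{JB}_G(a,b)$; (iv) for every random variable $X$ supported on $[a,b]$, $\mathbb E[D_G(X\parallel\mathbb E[X])]=\mathbb E[G(X)]-G(\mathbb E[X])\le 2\,\mathrm{JB}_G(a,b)$.
   Context: $D_G(y\parallel x)=G(y)-G(x)-(y-x)G'(x)$ (Bregman divergence; one-sided derivatives at endpoints). $\mathrm{JB}_G(a,b)=\frac{G(a)+G(b)}2-G\!\left(\frac{a+b}2\right)$ (Jensen–Bregman divergence). *)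

(* Defs.v *)
From HB Require Import structures.
From mathcomp Require Import all_boot all_order all_algebra.
From mathcomp Require Import all_classical all_reals all_analysis.
Set Implicit Arguments. Unset Strict Implicit. Unset Printing Implicit Defensive.
Import Order.TTheory GRing.Theory Num.Theory.
Import numFieldNormedType.Exports.
Local Open Scope classical_set_scope.
Local Open Scope ring_scope.

Definition convex_on01 {R : realType} (G : R -> R) : Prop :=
  forall x y t : R, 0 <= x <= 1 -> 0 <= y <= 1 -> 0 <= t <= 1 ->
    G (t * x + (1 - t) * y) <= t * G x + (1 - t) * G y.

(* For 0 < x < 1 this is the ordinary derivative; at
   x = 0 (resp. x = 1) it is the right (resp. left) one-sided derivative. *)
Definition is_deriv01 {R : realType} (G : R -> R) (x s : R) : Prop :=
  0 <= x <= 1 /\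
  (fun y => (G y - G x) / (y - x)) @
     within [set y : R | 0 <= y <= 1 /\ y != x] (nbhs x) --> s.

(* Bregman divergence D_G(y || x), where s = G'(x). *)
Definition bregman {R : realType} (G : R -> R) (y x s : R) : R :=
  G y - G x - (y - x) * s.

Definition JB {R : realType} (G : R -> R) (a b : R) : R :=
  (G a + G b) / 2 - G ((a + b) / 2).

(* Main.v *)
Require Import Defs.
From HB Require Import structures.
From mathcomp Require Import all_boot all_order all_algebra.
From mathcomp Require Import all_classical all_reals all_analysis.
From mathcomp Require Import ring lra measurable_realfun.
Import Order.TTheory GRing.Theory Num.Theory.
Import numFieldNormedType.Exports.
Local Open Scope classical_set_scope.
Local Open Scope ring_scope.

Set Implicit Arguments. Unset Strict Implicit.
Section alg.
Variables (R : realType) (G : R -> R).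
Hypothesis cG : convex_on01 G.

Lemma master u v w : 0 <= u -> u <= v -> v <= w -> w <= 1 ->
  (w - u) * G v <= (w - v) * G u + (v - u) * G w.
Proof.
move=> u0 uv vw w1.
have [uw|] := ltP u w; last first.
  move=> wu; have eu : u = w by apply/le_anti; rewrite (le_trans uv vw) wu.
  have ev : v = u by apply/le_anti; rewrite uv; rewrite eu vw.
  by rewrite ev eu !subrr !mul0r addr0.
pose t := (w - v) / (w - u).
have wu0 : 0 < w - u by rewrite subr_gt0.
have ht : v = t * u + (1 - t) * w.
  rewrite /t; field; lra.
have t0 : 0 <= t by rewrite /t divr_ge0 //; lra.
have t1 : t <= 1 by rewrite /t ler_pdivrMr //; lra.
have H : G v <= t * G u + (1 - t) * G w.
  rewrite ht; apply: cG; apply/andP; split; lra.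
have -> : (w - v) * G u + (v - u) * G w = (w - u) * (t * G u + (1 - t) * G w).
  rewrite /t; field; lra.
by rewrite ler_pM2l.
Qed.

Lemma major m1 p m2 : 0 <= m1 -> m1 <= p -> p <= m2 -> m2 <= 1 ->
  G p + G (m1 + m2 - p) <= G m1 + G m2.
Proof.
move=> h0 h1 h2 h3.
have [lt|] := ltP m1 m2; last first.
  move=> e; have e1 : m1 = m2 by apply/le_anti; rewrite (le_trans h1 h2) e.
  have ep : p = m1 by apply/le_anti; rewrite h1 e1 h2.
  by rewrite ep e1 addrK.
have H1 := master h0 h1 h2 h3.
have H2 := @master m1 (m1 + m2 - p) m2 h0 ltac:(lra) ltac:(lra) h3.
have d0 : 0 < m2 - m1 by rewrite subr_gt0.
rewrite -(ler_pM2l d0); lra.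
Qed.

Lemma JB_ge0 u v : 0 <= u -> u <= v -> v <= 1 -> 0 <= JB G u v.
Proof.
move=> h0 h1 h2; have := @major u ((u + v) / 2) v h0 ltac:(lra) ltac:(lra) h2.
have -> : u + v - (u + v) / 2 = (u + v) / 2 by field.
rewrite /JB; lra.
Qed.

Lemma partii a b x : 0 <= a -> a <= x -> x <= b -> b <= 1 ->
  JB G a x + JB G x b <= JB G a b.
Proof.
move=> h0 h1 h2 h3.
have := @major ((a + x) / 2) x ((x + b) / 2) ltac:(lra) ltac:(lra) ltac:(lra) ltac:(lra).
have -> : (a + x) / 2 + (x + b) / 2 - x = (a + b) / 2 by field.
rewrite /JB; lra.
Qed.

Lemma partiii a b a' b' : 0 <= a -> a <= a' -> a' <= b' -> b' <= b -> b <= 1 ->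
  JB G a' b' <= JB G a b.
Proof.
move=> h0 h1 h2 h3 h4.
have H1 := @partii a b b' h0 ltac:(lra) h3 h4.
have H2 := @partii a b' a' h0 h1 h2 ltac:(lra).
have H3 := @JB_ge0 b' b ltac:(lra) h3 h4.
have H4 := @JB_ge0 a a' h0 h1 ltac:(lra).
lra.
Qed.

Lemma chord a b m : 0 <= a -> a <= m -> m <= b -> b <= 1 ->
  exists al be : R, (forall y, a <= y <= b -> G y <= al + be * y) /\
    al + be * m - G m <= 2 * JB G a b.
Proof.
move=> h0 h1 h2 h3.
have [ab|] := ltP a b; last first.
  move=> e; have e1 : a = b by apply/le_anti; rewrite (le_trans h1 h2) e.
  have em : m = a by apply/le_anti; rewrite h1 e1 h2.
  exists (G a), 0; split.
    move=> y /andP[y1 y2]; have -> : y = a by apply/le_anti; rewrite y1 e1 y2.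
    by rewrite mul0r addr0.
  rewrite em -e1 /JB mul0r addr0 subrr.
  have -> : (a + a) / 2 = a by field.
  lra.
have D0 : 0 < b - a by rewrite subr_gt0.
pose be := (G b - G a) / (b - a).
exists (G a - be * a), be.
have L y : G a - be * a + be * y = ((b - y) * G a + (y - a) * G b) / (b - a).
  rewrite /be; field; lra.
split.
  move=> y /andP[y1 y2]; rewrite L ler_pdivlMr //.
  have := master h0 y1 y2 h3; lra.
rewrite L.
have Hc := @JB_ge0 a b h0 (ltW ab) h3.
rewrite /JB in Hc *.
set c := (a + b) / 2.
suff : (b - m) * G a + (m - a) * G b - (b - a) * G m <= (b - a) * (2 * ((G a + G b) / 2 - G c)).
  move=> H; rewrite lerBlDr ler_pdivrMr //; lra.
have [mc|cm] := leP m c.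
  have H1 := @master m c b ltac:(lra) mc ltac:(rewrite /c; lra) h3.
  have H2 : (m - a) * (2 * G c) <= (m - a) * (G a + G b).
    by apply: ler_wpM2l; lra.
  rewrite /c in H1 H2 *; nra.
have H1 := @master a c m h0 ltac:(rewrite /c; lra) (ltW cm) ltac:(lra).
have H2 : (b - m) * (2 * G c) <= (b - m) * (G a + G b).
  by apply: ler_wpM2l; lra.
rewrite /c in H1 H2 *; nra.
Qed.

Lemma slope_mono x z y : 0 <= x <= 1 -> 0 <= z -> z < y -> y <= 1 ->
  z != x -> y != x -> (G z - G x) / (z - x) <= (G y - G x) / (y - x).
Proof.
move=> /andP[x0 x1] z0 zy y1 zx yx.
have dz : z - x != 0 by rewrite subr_eq0.
have dy : y - x != 0 by rewrite subr_eq0.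
have key : (G z - G x) / (z - x) - (G y - G x) / (y - x) =
  ((G z - G x) * (y - x) - (G y - G x) * (z - x)) / ((z - x) * (y - x)).
  by field; apply/andP; split.
rewrite -subr_le0 key.
have [xz|zx'] := ltP x z.
  have H := @master x z y x0 (ltW xz) (ltW zy) y1.
  rewrite ler_pdivrMr; last by apply: mulr_gt0; lra.
  rewrite mul0r; nra.
have zx2 : z < x by rewrite lt_neqAle zx zx'.
have [xy|yx'] := ltP x y.
  have H := @master z x y z0 (ltW zx2) (ltW xy) y1.
  rewrite ler_ndivrMr; last by rewrite nmulr_rlt0; lra.
  rewrite mul0r; nra.
have yx2 : y < x by rewrite lt_neqAle yx yx'.
have H := @master z y x z0 (ltW zy) (ltW yx2) x1.
rewrite ler_pdivrMr; last by rewrite nmulr_rgt0; lra.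
rewrite mul0r; nra.
Qed.

Lemma proper_S x : 0 <= x <= 1 ->
  ProperFilter (within [set y : R | 0 <= y <= 1 /\ y != x] (nbhs x)).
Proof.
move=> /andP[x0 x1]; apply: within_nbhs_proper.
move=> B /nbhs_ballP [e /= e0 sB].
pose d := Num.min e (1/2) / 2.
have d0 : 0 < d by rewrite /d divr_gt0 // lt_min e0 /=; lra.
have de : d < e.
  rewrite /d ltr_pdivrMr //.
  have : Num.min e (1/2) <= e by rewrite ge_min lexx.
  lra.
have d1 : d <= 1/4.
  rewrite /d ler_pdivrMr //; have : Num.min e (1/2) <= 1/2 by rewrite ge_min lexx orbT.
  lra.
have [xh|xh] := leP x (1/2).
  exists (x + d); split.
    split; first by apply/andP; split; lra.
    by rewrite -subr_eq0 addrC addKr gt_eqF.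
  apply: sB; rewrite -ball_normE /ball_ /= opprD addrA subrr add0r normrN gtr0_norm //.
exists (x - d); split.
  split; first by apply/andP; split; lra.
  by rewrite -subr_eq0 addrC addKr oppr_eq0 gt_eqF.
apply: sB; rewrite -ball_normE /ball_ /= opprB addrC subrK gtr0_norm //.
Qed.

Lemma support x s y : is_deriv01 G x s -> 0 <= y <= 1 ->
  G x + (y - x) * s <= G y.
Proof.
move=> [hx hcv] /andP[y0 y1].
have PF := proper_S hx.
have [yx|xy|<-] := ltgtP y x; last by rewrite subrr mul0r addr0.
-
  have : (G y - G x) / (y - x) <= s.
    apply: (closed_cvg _ (@closed_ge _ ((G y - G x) / (y - x))) _ _ hcv).
    apply/nbhs_ballP; exists (x - y); first by rewrite /= subr_gt0.
    move=> t; rewrite -ball_normE /ball_ /= => ht [/andP[t0 t1] tx].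
    rewrite ltr_norml in ht.
    apply: slope_mono => //; first lra.
      by rewrite lt_eqF.
  rewrite ler_ndivrMr; last by rewrite subr_lt0.
  lra.
- have : s <= (G y - G x) / (y - x).
    apply: (closed_cvg _ (@closed_le _ ((G y - G x) / (y - x))) _ _ hcv).
    apply/nbhs_ballP; exists (y - x); first by rewrite /= subr_gt0.
    move=> t; rewrite -ball_normE /ball_ /= => ht [/andP[t0 t1] tx].
    rewrite ltr_norml in ht.
    apply: slope_mono => //; first lra.
      by rewrite gt_eqF.
  rewrite ler_pdivlMr; last by rewrite subr_gt0.
  lra.
Qed.

Lemma parti a b x s : is_deriv01 G x s -> 0 <= a -> a <= b -> b <= 1 ->
  JB G a b <= (bregman G a x s + bregman G b x s) / 2.
Proof.
move=> hd h0 h1 h2.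
have := @support x s ((a + b) / 2) hd ltac:(apply/andP; split; lra).
rewrite /JB /bregman; lra.
Qed.

Lemma Gbound y : 0 <= y <= 1 -> `|G y| <= `|G 0| + `|G 1| + 2 * `|G (1/2)|.
Proof.
move=> /andP[y0 y1].
have U z : 0 <= z <= 1 -> G z <= `|G 0| + `|G 1|.
  move=> /andP[z0 z1].
  have : G (z * 1 + (1 - z) * 0) <= z * G 1 + (1 - z) * G 0.
    by apply: cG; apply/andP; split; lra.
  rewrite mulr1 mulr0 addr0 => H.
  have h1 : z * G 1 <= z * `|G 1| by apply: ler_wpM2l => //; exact: ler_norm.
  have h2 : (1 - z) * G 0 <= (1 - z) * `|G 0| by apply: ler_wpM2l; [lra|exact: ler_norm].
  have := normr_ge0 (G 0); have := normr_ge0 (G 1); nra.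
have L : G (1/2) <= (G y + G (1 - y)) / 2.
  have : G (1/2 * y + (1 - 1/2) * (1 - y)) <= 1/2 * G y + (1 - 1/2) * G (1 - y).
    by apply: cG; apply/andP; split; lra.
  have -> : 1/2 * y + (1 - 1/2) * (1 - y) = 1/2 by field.
  lra.
have h1 := U y ltac:(apply/andP; split; lra).
have h2 := U (1 - y) ltac:(apply/andP; split; lra).
have h3 := ler_norm (G (1/2)); have h4 : - `|G (1/2)| <= G (1/2).
  by rewrite lerNl -normrN ler_norm.
rewrite ler_norml; apply/andP; split; lra.
Qed.

Lemma mG : (forall x : R, 0 < x < 1 -> derivable G x 1) ->
  measurable_fun (`]0, 1[ `|` ([set 0] `|` [set 1]) : set R) G.
Proof.
move=> dG; apply/measurable_funU => //.
  exact: measurableU.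
split; last first.
  by apply/measurable_funU => //; split; exact: measurable_fun_set1.
apply: open_continuous_measurable_fun; first exact: interval_open.
move=> x; rewrite inE /= in_itv /= => hx.
by apply/differentiable_continuous; rewrite -derivable1_diffP; apply: dG.
Qed.

Section iv.
Context (d : measure_display) (T : measurableType d) (P : probability T R).
Local Open Scope ereal_scope.

Lemma Lfun_bdd (f : T -> R) (M : R) : measurable_fun setT f ->
  (forall w, (`|f w| <= M)%R) -> f \in Lfun P 1.
Proof.
move=> mf hM; apply/Lfun1_integrable; apply: measurable_bounded_integrable => //.
  by have := @probability_le1 _ _ _ P setT; move=> /(_ measurableT) h; apply: (le_lt_trans h); rewrite ltry.
exists M; split; first exact: num_real.
move=> r Mr w _; apply: le_trans (hM w) _; exact: ltW.
Qed.

Lemma E_affine (X : T -> R) (c k : R) : X \in Lfun P 1 ->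
  'E_P[fun w => (c + k * X w)%R] = c%:E + k%:E * 'E_P[X].
Proof.
move=> LX.
have -> : (fun w => c + k * X w)%R = (cst c \+ (k \o* X))%R.
  by apply/funext => w /=; rewrite mulrC.
rewrite expectationD ?expectation_cst ?expectationZl //; first exact: Lfun_cst.
exact: Lfun_scale.
Qed.

Lemma partiv (dG : forall x : R, (0 < x < 1)%R -> derivable G x 1) (a b : R) :
  (0 <= a)%R -> (a <= b)%R -> (b <= 1)%R ->
  forall (X : {RV P >-> R}),
     (forall w : T, (a <= X w <= b)%R) ->
     forall s : R, is_deriv01 G (fine 'E_P[X]) s ->
       ('E_P[fun w => bregman G (X w) (fine 'E_P[X]) s]
         = 'E_P[G \o X] - (G (fine 'E_P[X]))%:E) /\
       ('E_P[G \o X] - (G (fine 'E_P[X]))%:E <= (2 * JB G a b)%:E).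
Proof.
move=> h0 h1 h2 X hX s _.
have mX : measurable_fun setT X := measurable_funP X.
have X01 w : (0 <= X w <= 1)%R.
  by have /andP[u v] := hX w; apply/andP; split; [exact: le_trans u|exact: le_trans h2].
have mGX : measurable_fun setT (G \o X).
  apply: (measurable_comp _ _ (mG dG) mX).
    by apply: measurableU => //; exact: measurableU.
  move=> _ [w _ <-]; have /andP[u v] := X01 w.
  rewrite le_eqVlt in u; case/orP: u => [/eqP <-|u']; first by right; left.
  rewrite le_eqVlt in v; case/orP: v => [/eqP ->|v']; first by right; right.
  by left; rewrite /= in_itv /= u' v'.
have LX : (X : T -> R) \in Lfun P 1.
  apply: (@Lfun_bdd _ 1 mX) => w; have /andP[u v] := X01 w.
  by rewrite ger0_norm.
have LGX : (G \o X) \in Lfun P 1.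
  by apply: (Lfun_bdd mGX) => w; apply: Gbound.
set m := fine 'E_P[X].
have EX : 'E_P[X] = m%:E by rewrite /m fineK // expectation_fin_num.
have ma : (a <= m)%R.
  rewrite -lee_fin -EX -(expectation_cst P a); apply: expectation_le => //.
  - by move=> w; have /andP[u _] := X01 w.
  - by apply: aeW => w; have /andP[u _] := hX w.
have mb : (m <= b)%R.
  rewrite -lee_fin -EX -(expectation_cst P b); apply: expectation_le => //.
  - by move=> w; have /andP[u _] := X01 w.
  - by move=> x /=; exact: le_trans h1.
  - by apply: aeW => w; have /andP[_ u] := hX w.
have E2 : 'E_P[fun w => (G m + (- m * s) + s * X w)%R] = (G m)%:E.
  rewrite E_affine // EX -EFinM -EFinD; congr (_%:E); ring.
split.
  have -> : (fun w => bregman G (X w) m s) =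
      ((G \o X) \- (fun w => G m + (- m * s) + s * X w))%R.
    by apply/funext => w; rewrite /bregman /=; ring.
  rewrite expectationB ?E2 //.
  apply: (@Lfun_bdd _ (`|G m + - m * s| + `|s|)%R).
    by apply: measurable_funD => //; apply: measurable_funM.
  move=> w; apply: (le_trans (ler_normD _ _)); rewrite lerD2l normrM.
  have /andP[u v] := X01 w; rewrite (ger0_norm u).
  by rewrite ler_piMr.
have [al [be [Hy Hm]]] := @chord a b m h0 ma mb h2.
have EGX : 'E_P[G \o X] = (fine 'E_P[G \o X])%:E by rewrite fineK // expectation_fin_num.
have le1 : 'E_P[G \o X] <= 'E_P[fun w => (al + be * X w)%R].
  rewrite unlock; apply: le_integral => //.
  - by apply/Lfun1_integrable.
  - apply/Lfun1_integrable.
    apply: (@Lfun_bdd _ (`|al| + `|be|)%R).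
      by apply: measurable_funD => //; apply: measurable_funM.
    move=> w; apply: (le_trans (ler_normD _ _)); rewrite lerD2l normrM.
    have /andP[u v] := X01 w; rewrite (ger0_norm u).
    by rewrite ler_piMr.
  - by move=> w _; rewrite lee_fin /=; apply: Hy.
rewrite E_affine // EX -EFinM -EFinD in le1.
rewrite EGX -EFinB lee_fin; rewrite EGX lee_fin in le1.
lra.
Qed.

End iv.
End alg.

Unset Implicit Arguments.
Theorem propositionC1 (R : realType) (G : R -> R) (a b : R) :
  convex_on01 G ->
  (forall x : R, 0 < x < 1 -> derivable G x 1) ->
  0 <= a -> a <= b -> b <= 1 ->
  (* (i) *)
  (forall x s : R, is_deriv01 G x s ->
     JB G a b <= (bregman G a x s + bregman G b x s) / 2) /\
  (* (ii) reverse triangle inequality *)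
  (forall x : R, a <= x <= b -> JB G a x + JB G x b <= JB G a b) /\
  (* (iii) *)
  (forall a' b' : R, a <= a' -> a' <= b' -> b' <= b -> JB G a' b' <= JB G a b) /\
  (* (iv) *)
  (forall (d : measure_display) (T : measurableType d) (P : probability T R)
          (X : {RV P >-> R}),
     (forall w : T, a <= X w <= b) ->
     forall s : R, is_deriv01 G (fine 'E_P[X])%E s ->
       ('E_P[fun w => bregman G (X w) (fine 'E_P[X]%E) s]
         = 'E_P[G \o X] - (G (fine 'E_P[X]%E))%:E)%E /\
       ('E_P[G \o X] - (G (fine 'E_P[X]%E))%:E <= (2 * JB G a b)%:E)%E).
Proof.
move=> cG dG h0 h1 h2.
split; first by move=> x s hd; apply: (parti cG hd h0 h1 h2).
split; first by move=> x /andP[u v]; apply: (partii cG h0 u v h2).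
split; first by move=> a' b' u v w; apply: (partiii cG h0 u v w h2).
move=> d T P X hX s hd; exact: (partiv cG dG h0 h1 h2 hX hd).
Qed.
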